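(* Let $\mathcal H$ and $\mathcal H'$ be hypergraphs such that for any $\sigma\in\mathcal H$ and any $\sigma'\in\mathcal H'$, either $\sigma\cap\sigma'=\emptyset$ or $\sigma\cap\sigma'\in\mathcal H\cap\mathcal H'$. Then there are long exact sequences of relative embedded homology $$\cdots\to H_n(\mathcal H\cap\mathcal H',\delta\mathcal H\cap\delta\mathcal H')\to H_n(\mathcal H,\delta\mathcal H)\oplus H_n(\mathcal H',\delta\mathcal H')\to H_n(\mathcal H\cup\mathcal H',\delta\mathcal H\cup\delta\mathcal H')\to H_{n-1}(\mathcal H\cap\mathcal H',\delta\mathcal H\cap\delta\mathcal H')\to\cdots$$ and $$\cdots\to H_n(\Delta\mathcal H\cap\Delta\mathcal H',\mathcal H\cap\mathcal H')\to H_n(\Delta\mathcal H,\mathcal H)\oplus H_n(\Delta\mathcal H',\mathcal H')\to H_n(\Delta\mathcal H\cup\Delta\mathcal H',\mathcal H\cup\mathcal H')\to H_{n-1}(\Delta\mathcal H\cap\Delta\mathcal H',\mathcal H\cap\mathcal H')\to\cdots.$$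
   Context: A hypergraph is a finite set of nonempty finite subsets of a vertex set (hyperedges); an $n$-hyperedge has $n+1$ vertices. Unions and intersections are of sets of hyperedges. The associated simplicial complex is $\Delta\mathcal H=\{\sigma\ne\emptyset:\sigma\subseteq\tau\text{ for some }\tau\in\mathcal H\}$; the lower-associated simplicial complex is $\delta\mathcal H=\{\sigma\in\mathcal H:\text{every nonempty }\tau\subseteq\sigma\text{ lies in }\mathcal H\}$. Fix an abelian coefficient group $G$; chains are simplicial chains with coefficients in $G$ with boundary $\partial$; $G(\mathcal H)_n$ is the group of $G$-linear combinations of $n$-hyperedges of $\mathcal H$; $\mathrm{Inf}_n(\mathcal H)=G(\mathcal H)_n\cap\partial_n^{-1}(G(\mathcal H)_{n-1})$. For $\mathcal A\subseteq\mathcal B$, relative embedded homology is $H_n(\mathcal B,\mathcal A)=H_n(\mathrm{Inf}_*(\mathcal B)/\mathrm{Inf}_*(\mathcal A))$. *)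

(* Defs.v *)
From HB Require Import structures.
From mathcomp Require Import all_boot all_order all_algebra.
Set Implicit Arguments. Unset Strict Implicit. Unset Printing Implicit Defensive.
Import GRing.Theory.
Local Open Scope ring_scope.

Section Hyper.
Variables (V : finType) (G : zmodType).

Definition hypergraph (H : {set {set V}}) : Prop := set0 \notin H.

Definition Delta (H : {set {set V}}) : {set {set V}} :=
  [set s : {set V} | (s != set0) && [exists t in H, s \subset t]].

Definition delta (H : {set {set V}}) : {set {set V}} :=
  [set s in H | [forall t : {set V}, ((t != set0) && (t \subset s)) ==> (t \in H)]].

(* Chains with coefficients in G: a simplex is a nonempty subset of V, an
   n-simplex has n+1 vertices; a chain is a finitely supported (here: any)
   G-valued function on subsets. Degree-n chains are those supported on
   (n+1)-element sets. *)
Definition chain := {ffun {set V} -> G}.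

Definition vlt (u v : V) : bool := (enum_rank u < enum_rank v)%N.

Definition sgnG (k : nat) (x : G) : G := if odd k then - x else x.

(* simplicial boundary, vertices ordered by enum_rank:
   d[v0..vn] = sum_i (-1)^i [v0..^vi..vn]; the boundary of a vertex is 0. *)
Definition bd (c : chain) : chain :=
  [ffun s : {set V} => if s == set0 then 0 else
     \sum_(v : V | v \notin s) sgnG #|[set u in s | vlt u v]| (c (v |: s))].

Definition homog (n : nat) (c : chain) : Prop :=
  forall s, c s != 0 -> #|s| = n.+1.

Definition supported_in (H : {set {set V}}) (c : chain) : Prop :=
  forall s, c s != 0 -> s \in H.

Definition GH (H : {set {set V}}) (n : nat) (c : chain) : Prop :=
  homog n c /\ supported_in H c.

(* Inf_n(H) = G(H)_n  cap  d_n^{-1}(G(H)_{n-1})   (G(H)_{-1} = 0, d_0 = 0) *)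
Definition Inf (H : {set {set V}}) (n : nat) (c : chain) : Prop :=
  GH H n c /\ (if n is k.+1 then GH H k (bd c) else True).

(* H_n(B, A) = H_n(Inf(B)/Inf(A)), written (third isomorphism theorem) as the
   subquotient  relZ / relB  of the chain group:
   cycles of the quotient complex lifted to Inf_n(B), modulo
   d(Inf_{n+1}(B)) + Inf_n(A). *)
Definition relZ (B A : {set {set V}}) (n : nat) (c : chain) : Prop :=
  Inf B n c /\ (if n is k.+1 then Inf A k (bd c) else True).

Definition relB (B A : {set {set V}}) (n : nat) (c : chain) : Prop :=
  exists y a, Inf B n.+1 y /\ Inf A n a /\ c = bd y + a.

End Hyper.

(* Group homomorphisms between subquotients Z/B (of ambient M) and Z'/B'
   (of ambient M'), represented by a lifting function f : M -> M'. *)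
Definition hom_sq (M M' : zmodType) (Z B : M -> Prop) (Z' B' : M' -> Prop)
  (f : M -> M') : Prop :=
  [/\ forall x, Z x -> Z' (f x),
      forall x, B x -> B' (f x) &
      forall x y, Z x -> Z y -> B' (f (x + y) - f x - f y)].

Definition exact_at (M1 M2 M3 : zmodType) (Z1 B1 : M1 -> Prop)
  (Z2 B2 : M2 -> Prop) (Z3 B3 : M3 -> Prop) (f : M1 -> M2) (g : M2 -> M3) :
  Prop :=
  forall z, Z2 z -> (B3 (g z) <-> exists2 w, Z1 w & B2 (z - f w)).

Section MV.
Variables (V : finType) (G : zmodType).

Definition sumP (P1 P2 : chain V G -> Prop) (p : (chain V G * chain V G)%type)
  : Prop := P1 p.1 /\ P2 p.2.

Definition mv_i (c : chain V G) : (chain V G * chain V G)%type := (c, - c).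
Definition mv_j (p : (chain V G * chain V G)%type) : chain V G := p.1 + p.2.

(* Mayer-Vietoris long exact sequence for pairs (B1, A1), (B2, A2):
   ... -> H_n(B1 cap B2, A1 cap A2) -i-> H_n(B1,A1) (+) H_n(B2,A2)
       -j-> H_n(B1 cup B2, A1 cup A2) -d-> H_{n-1}(B1 cap B2, A1 cap A2) -> ...
   ending with  -> H_0(B1 cup B2, A1 cup A2) -> 0.
   i and j are the natural maps induced by inclusions (x |-> (x,-x),
   (a,b) |-> a+b); d_n : H_{n+1}(cup) -> H_n(cap) is some homomorphism. *)
Definition MV_les (B1 A1 B2 A2 : {set {set V}}) : Prop :=
  let Zi n := @relZ V G (B1 :&: B2) (A1 :&: A2) n in
  let Bi n := @relB V G (B1 :&: B2) (A1 :&: A2) n in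
  let Zs n := sumP (@relZ V G B1 A1 n) (@relZ V G B2 A2 n) in
  let Bs n := sumP (@relB V G B1 A1 n) (@relB V G B2 A2 n) in
  let Zu n := @relZ V G (B1 :|: B2) (A1 :|: A2) n in
  let Bu n := @relB V G (B1 :|: B2) (A1 :|: A2) n in
  exists d : nat -> chain V G -> chain V G,
    (forall n,
      [/\ hom_sq (Zi n) (Bi n) (Zs n) (Bs n) mv_i,
          hom_sq (Zs n) (Bs n) (Zu n) (Bu n) mv_j &
          hom_sq (Zu n.+1) (Bu n.+1) (Zi n) (Bi n) (d n)] /\
      [/\ exact_at (Zu n.+1) (Bu n.+1) (Zi n) (Bi n) (Zs n) (Bs n) (d n) mv_i,
          exact_at (Zi n) (Bi n) (Zs n) (Bs n) (Zu n) (Bu n) mv_i mv_j &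
          exact_at (Zs n.+1) (Bs n.+1) (Zu n.+1) (Bu n.+1) (Zi n) (Bi n)
                   mv_j (d n)])
    /\ (forall z, Zu 0 z -> exists2 w, Zs 0 w & Bu 0 (z - mv_j w)).

End MV.

(* Main.v *)
Require Import Defs.
From mathcomp Require Import all_boot all_order all_algebra.
Set Implicit Arguments. Unset Strict Implicit. Unset Printing Implicit Defensive.
Import GRing.Theory.
Local Open Scope ring_scope.

Section Bd.
Variables (V : finType) (G : zmodType).
Implicit Types (c x y : chain V G) (s t : {set V}) (X A B : {set {set V}}) (n k : nat).

Lemma sgnGB k (a b : G) : sgnG k (a - b) = sgnG k a - sgnG k b.
Proof. by rewrite /sgnG; case: ifP => // _; rewrite opprD. Qed.

Lemma sgnGK k m (a : G) : sgnG k (sgnG m a) = sgnG (k + m) a.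
Proof. by rewrite /sgnG oddD; case: (odd k); case: (odd m) => //=; rewrite opprK. Qed.

Lemma sgnG_eq0 k (a : G) : (sgnG k a == 0) = (a == 0).
Proof. by rewrite /sgnG; case: ifP => //; rewrite oppr_eq0. Qed.

Lemma bdB x y : bd (x - y) = bd x - bd y.
Proof.
apply/ffunP => s; rewrite !ffunE; case: ifP => _; first by rewrite subr0.
rewrite -sumrB; apply: eq_bigr => v _; by rewrite !ffunE sgnGB.
Qed.

Lemma bd0 : bd (0 : chain V G) = 0.
Proof.
apply/ffunP => s; rewrite !ffunE; case: ifP => // _.
by rewrite big1 // => v _; rewrite ffunE /sgnG; case: ifP; rewrite ?oppr0.
Qed.

Lemma bdN x : bd (- x) = - bd x.
Proof. by have := bdB 0 x; rewrite bd0 !sub0r. Qed.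

Lemma bdD x y : bd (x + y) = bd x + bd y.
Proof. by have := bdB x (- y); rewrite opprK bdN opprK. Qed.

Lemma card_lt_U1 s v w : v \notin s -> vlt v w ->
  #|[set u in v |: s | vlt u w]| = (#|[set u in s | vlt u w]|).+1.
Proof.
move=> vs vw.
have -> : [set u in v |: s | vlt u w] = v |: [set u in s | vlt u w].
  apply/setP => u; rewrite !inE; case: eqP => // ->; by rewrite vw.
by rewrite cardsU1 !inE (negbTE vs).
Qed.

Lemma card_lt_U1' s v w : ~~ vlt w v ->
  #|[set u in w |: s | vlt u v]| = #|[set u in s | vlt u v]|.
Proof.
move=> wv; apply: eq_card => u; rewrite !inE; case: eqP => // ->.
by rewrite (negbTE wv) !andbF.
Qed.

Lemma vlt_asym (v w : V) : vlt v w -> ~~ vlt w v.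
Proof. rewrite /vlt => h; rewrite -leqNgt; exact: ltnW. Qed.

Lemma vlt_neq (v w : V) : vlt v w -> w != v.
Proof. by rewrite /vlt => h; apply/eqP => e; rewrite e ltnn in h. Qed.

Lemma vlt_total (v w : V) : v != w -> vlt v w || vlt w v.
Proof.
move=> nvw; rewrite /vlt; case: ltngtP => // e.
by move: nvw; rewrite (enum_rank_inj (ord_inj e)) eqxx.
Qed.

Lemma sgnG_sum k (P : pred V) (F : V -> G) :
  sgnG k (\sum_(i | P i) F i) = \sum_(i | P i) sgnG k (F i).
Proof. by rewrite /sgnG; case: ifP => // _; rewrite sumrN. Qed.

Lemma bdbd x : bd (bd x) = 0.
Proof.
apply/ffunP => s; rewrite !ffunE; case: ifP => // s0.
pose a t w := #|[set u in t | vlt u w]|.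
pose g v w := if (v \notin s) && (w \notin s) && (w != v) then
   sgnG (a s v) (sgnG (a (v |: s) w) (x (w |: (v |: s)))) else 0.
transitivity (\sum_v \sum_w g v w).
  rewrite big_mkcond; apply: eq_bigr => v _; rewrite ffunE.
  have -> : (v |: s == set0) = false.
    by apply/negbTE/set0Pn; exists v; rewrite !inE eqxx.
  case: ifP => vs; last by rewrite /g vs /= big1.
  rewrite sgnG_sum big_mkcond /=; apply: eq_bigr => w _.
  rewrite /g vs !inE /=; by case: (w == v); case: (w \in s).
have split_vw : forall v w, g v w = (if vlt v w then g v w else 0) + (if vlt w v then g v w else 0).
  move=> v w; case: (eqVneq v w) => [->|nvw].
    by rewrite /g eqxx !andbF /=; case: ifP; rewrite addr0.
  have := vlt_total nvw; case: ifP => h1 /=; case: ifP => h2 //=; rewrite ?addr0 ?add0r //.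
  by move: (vlt_asym h1); rewrite h2.
rewrite (eq_bigr (fun v => \sum_w ((if vlt v w then g v w else 0) + (if vlt w v then g v w else 0)))); last first.
  by move=> v _; apply: eq_bigr => w _; apply: split_vw.
rewrite (eq_bigr (fun v => \sum_w (if vlt v w then g v w else 0) + \sum_w (if vlt w v then g v w else 0))); last first.
  by move=> v _; rewrite big_split.
rewrite big_split /= [X in _ + X]exchange_big /= -big_split /=.
apply: big1 => v _; rewrite -big_split /=; apply: big1 => w _.
case: ifP => [vw|_]; last by rewrite addr0.
rewrite /g.
have nwv := vlt_neq vw.
have nvw : v != w by rewrite eq_sym.
rewrite [in X in _ + X]eq_sym.
case: (boolP (v \in s)) => vs /=; first by case: (w \in s); rewrite /= ?addr0.
case: (boolP (w \in s)) => ws /=; first by rewrite addr0.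
rewrite nwv /= sgnGK sgnGK /a card_lt_U1 // card_lt_U1' ?vlt_asym //.
rewrite setUCA addnS addnC /sgnG /=; case: (odd _); by rewrite /= ?addNr ?addrN.
Qed.

Lemma subfE (f g : chain V G) s : (f - g) s = f s - g s.
Proof. by rewrite !ffunE. Qed.

Lemma nz_bd c t : bd c t != 0 -> t != set0 /\ exists2 v, v \notin t & c (v |: t) != 0.
Proof.
rewrite ffunE; case: ifP => [_|t0 hs]; first by rewrite eqxx.
split => //.
suff : [exists v, (v \notin t) && (c (v |: t) != 0)].
  by case/existsP => v /andP[??]; exists v.
apply: contraR hs => /existsPn h.
rewrite big1 // => v vt; move: (h v); rewrite vt /= negbK => /eqP ->.
by rewrite /sgnG; case: ifP; rewrite ?oppr0.
Qed.

Lemma homog_bd n c : homog n.+1 c -> homog n (bd c).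
Proof.
move=> h t /nz_bd [_ [v vt /h]]; rewrite cardsU1 vt add1n.
by case.
Qed.

Lemma homogB n x y : homog n x -> homog n y -> homog n (x - y).
Proof.
move=> hx hy s; rewrite !ffunE; case: (eqVneq (x s) 0) => [->|/hx //].
by rewrite add0r oppr_eq0 => /hy.
Qed.

Lemma suppB X x y : supported_in X x -> supported_in X y -> supported_in X (x - y).
Proof.
move=> hx hy s; rewrite !ffunE; case: (eqVneq (x s) 0) => [->|/hx //].
by rewrite add0r oppr_eq0 => /hy.
Qed.

Lemma GHB X n x y : GH X n x -> GH X n y -> GH X n (x - y).
Proof. by move=> [h1 s1] [h2 s2]; split; [apply: homogB | apply: suppB]. Qed.

Lemma GH0 X n : GH X n (0 : chain V G).
Proof. by split => s; rewrite ffunE eqxx. Qed.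

Lemma Inf0 X n : Inf X n (0 : chain V G).
Proof. by split; [apply: GH0 | case: n => // n; rewrite bd0; apply: GH0]. Qed.

Lemma InfB X n x y : Inf X n x -> Inf X n y -> Inf X n (x - y).
Proof.
case: n => [|n] [h1 b1] [h2 b2]; split => //; try exact: GHB.
by rewrite bdB; apply: GHB.
Qed.

Lemma InfN X n x : Inf X n x -> Inf X n (- x).
Proof. by move=> h; rewrite -sub0r; apply: InfB => //; apply: Inf0. Qed.

Lemma InfD X n x y : Inf X n x -> Inf X n y -> Inf X n (x + y).
Proof. by move=> h1 h2; rewrite -(opprK y); apply: InfB => //; apply: InfN. Qed.

Lemma Inf_bd X n y : Inf X n.+1 y -> Inf X n (bd y).
Proof. by case=> _ h; split => //; case: n h => // n _; rewrite bdbd; apply: GH0. Qed.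

Lemma GH_mono A B n x : A \subset B -> GH A n x -> GH B n x.
Proof. by move=> AB [h s]; split => // t /s /(subsetP AB). Qed.

Lemma Inf_mono A B n x : A \subset B -> Inf A n x -> Inf B n x.
Proof.
move=> AB [h1 h2]; split; first exact: GH_mono h1.
by case: n h1 h2 => // n _; apply: GH_mono.
Qed.

Lemma GHI (X1 X2 : {set {set V}}) n x : GH (X1 :&: X2) n x <-> GH X1 n x /\ GH X2 n x.
Proof.
split.
  by move=> [h s]; split; split => // t /s; rewrite inE => /andP[].
by move=> [[h s1] [_ s2]]; split => // t tx; rewrite inE (s1 _ tx) (s2 _ tx).
Qed.

Lemma InfI (X1 X2 : {set {set V}}) n x : Inf (X1 :&: X2) n x <-> Inf X1 n x /\ Inf X2 n x.
Proof.
split.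
  case=> /GHI [g1 g2] h; split; split => //; move: h; case: n {g1 g2} => // n /GHI [] //.
case=> [[g1 h1] [g2 h2]]; split; first by apply/GHI.
by move: h1 h2; case: n {g1 g2} => // n h1 h2; apply/GHI.
Qed.

Definition Cond (X1 X2 : {set {set V}}) : Prop :=
 [/\ (forall t v, t != set0 -> v \notin t -> v |: t \in X1 -> t \in X2 -> t \in X1),
     (forall t v, t != set0 -> v \notin t -> v |: t \in X2 -> t \in X1 -> t \in X2) &
     (forall t v w, t != set0 -> v \notin t -> w \notin t -> v != w ->
        v |: t \in X1 -> w |: t \in X2 -> t \in X1 /\ t \in X2)].

Lemma InfU (X1 X2 : {set {set V}}) n x : Cond X1 X2 -> Inf (X1 :|: X2) n x ->
  exists x1 x2, [/\ Inf X1 n x1, Inf X2 n x2 & x = x1 + x2].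
Proof.
move=> [ca1 ca2 cb] [[hx sx] hbx].
pose c1 : chain V G := [ffun s => if s \in X1 then x s else 0].
have c2E : forall s, (x - c1) s = if s \in X1 then 0 else x s.
  by move=> s; rewrite !ffunE; case: ifP; rewrite ?subrr ?subr0.
have c1E : forall s, c1 s = if s \in X1 then x s else 0 by move=> s; rewrite ffunE.
exists c1, (x - c1); split; last by rewrite addrC subrK.
- have g1 : forall k, homog k x -> GH X1 k c1.
    move=> k hk; split => s; rewrite c1E; case: ifP => [sX xs|_]; rewrite ?eqxx //; exact: hk.
  split; first exact: g1.
  case: n hx hbx => // k hx [hbx sbx]; split; first by apply: homog_bd; case: (g1 _ hx).
  move=> t nz; apply/negPn/negP => tX1.
  case/nz_bd: (nz) => t0 [v vt]; rewrite c1E; case: ifP => [vX1 xv|_]; last by rewrite eqxx.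
  case: (eqVneq (bd x t) 0) => bx; last first.
    have := sbx _ bx; rewrite inE (negbTE tX1) /= => tX2.
    by move: (ca1 t v t0 vt vX1 tX2); rewrite (negbTE tX1).
  have : bd (x - c1) t != 0 by rewrite bdB subfE bx sub0r oppr_eq0.
  case/nz_bd => _ [w wt]; rewrite c2E; case: ifP => [_|wX1 xw]; first by rewrite eqxx.
  have := sx _ xw; rewrite inE wX1 /= => wX2.
  have vw : v != w by apply: contraFN wX1 => /eqP <-.
  by case: (cb t v w t0 vt wt vw vX1 wX2); rewrite (negbTE tX1).
- have g2 : forall k, homog k x -> GH X2 k (x - c1).
    move=> k hk; split => s; rewrite c2E; case: ifP => [_|sX1 xs]; rewrite ?eqxx //; first exact: hk.
    by have := sx _ xs; rewrite inE sX1.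
  split; first exact: g2.
  case: n hx hbx {g2} => // k hx [hbx sbx]; split.
    by apply: homog_bd; apply: homogB => // s; rewrite c1E; case: ifP => [_ /hx //|_]; rewrite eqxx.
  move=> t nz; apply/negPn/negP => tX2.
  case/nz_bd: (nz) => t0 [w wt]; rewrite c2E; case: ifP => [_|wX1 xw]; first by rewrite eqxx.
  have := sx _ xw; rewrite inE wX1 /= => wX2.
  case: (eqVneq (bd x t) 0) => bx; last first.
    have := sbx _ bx; rewrite inE (negbTE tX2) orbF => tX1.
    by move: (ca2 t w t0 wt wX2 tX1); rewrite (negbTE tX2).
  have : bd c1 t != 0.
    move: nz; rewrite bdB subfE bx sub0r oppr_eq0.
    by [].
  case/nz_bd => _ [v vt]; rewrite c1E; case: ifP => [vX1 xv|_]; last by rewrite eqxx.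
  have vw : v != w by apply: contraFN wX1 => /eqP <-.
  by case: (cb t v w t0 vt wt vw vX1 wX2); rewrite (negbTE tX2).
Qed.


Definition down X := forall s t, s \in X -> t \subset s -> t != set0 -> t \in X.

Lemma Cond_down (X1 X2 : {set {set V}}) : down X1 -> down X2 -> Cond X1 X2.
Proof.
move=> d1 d2; split.
- by move=> t v t0 _ h _; apply: d1 h _ t0; apply: subsetUr.
- by move=> t v t0 _ h _; apply: d2 h _ t0; apply: subsetUr.
- move=> t v w t0 _ _ _ h1 h2; split; [apply: d1 h1 _ t0 | apply: d2 h2 _ t0];
  apply: subsetUr.
Qed.

Lemma Cond_hyp (H H' : {set {set V}}) :
  (forall s s', s \in H -> s' \in H' -> s :&: s' = set0 \/ s :&: s' \in H :&: H') ->
  Cond H H'.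
Proof.
move=> hyp; split.
- move=> t v t0 _ h1 h2; case: (hyp _ _ h1 h2).
    by move/setIidPr: (subsetUr [set v] t) => ->; move/eqP; rewrite (negbTE t0).
  by move/setIidPr: (subsetUr [set v] t) => ->; rewrite inE => /andP[].
- move=> t v t0 _ h2 h1; case: (hyp _ _ h1 h2).
    by move/setIidPl: (subsetUr [set v] t) => ->; move/eqP; rewrite (negbTE t0).
  by move/setIidPl: (subsetUr [set v] t) => ->; rewrite inE => /andP[].
- move=> t v w t0 vt wt vw h1 h2.
  have e : (v |: t) :&: (w |: t) = t.
    apply/setP => u; rewrite !inE; case: (eqVneq u v) => [->|uv] /=.
      by rewrite (negbTE vt) (negbTE vw).
    by case: (eqVneq u w) => [->|uw] /=; rewrite ?(negbTE wt) ?andbb.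
  case: (hyp _ _ h1 h2); rewrite e; first by move/eqP; rewrite (negbTE t0).
  by rewrite inE => /andP[].
Qed.

Lemma down_delta (H : {set {set V}}) : down (delta H).
Proof.
move=> s t; rewrite !inE => /andP[sH /forallP hs] ts t0; apply/andP; split.
  by move: (hs t); rewrite t0 ts.
apply/forallP => u; apply/implyP => /andP[u0 ut].
by move: (hs u); rewrite u0 (subset_trans ut ts).
Qed.

Lemma down_Delta (H : {set {set V}}) : down (Delta H).
Proof.
move=> s t; rewrite !inE => /andP[_ /exists_inP[u uH su]] ts t0.
by rewrite t0; apply/exists_inP; exists u => //; apply: subset_trans ts su.
Qed.

Lemma delta_sub (H : {set {set V}}) : delta H \subset H.
Proof. by apply/subsetP => s; rewrite inE => /andP[]. Qed.

Lemma Delta_sup (H : {set {set V}}) : hypergraph H -> H \subset Delta H.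
Proof.
move=> hH; apply/subsetP => s sH; rewrite inE; apply/andP; split.
  by apply: contraNneq hH => <-.
by apply/exists_inP; exists s.
Qed.

End Bd.

From Stdlib Require Import Classical ClassicalEpsilon.

Section Alg.
Variable M : zmodType.
Implicit Types p q r s : M.
Lemma eq_swap p q r s : p + q = r + s -> p - r = s - q.
Proof. by move=> e; rewrite -[p](addrK q) e addrAC [r + s]addrC addrK. Qed.
Lemma eq_swap2 p q r s : p - q = r + s -> q + r = p - s.
Proof. by move=> e; rewrite -[p](subrK q) e addrAC addrK addrC. Qed.
Lemma subADD p q r s : (p + q) - (r + s) = (p - r) + (q - s).
Proof. by rewrite opprD addrACA. Qed.
Lemma subACA p q r s : (p - q) - (r - s) = (p - r) - (q - s).
Proof. by rewrite subADD opprB opprK [- q + s]addrC. Qed.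
Lemma sub_sub1 p q r : (p - q) - (p - r) = r - q.
Proof. by rewrite opprB addrC addrA subrK. Qed.
Lemma sub_sub2 p q r : (p - r) - (q - r) = p - q.
Proof. by rewrite opprB addrA subrK. Qed.
Lemma subsubK p r : p - (p - r) = r.
Proof. by rewrite opprB addrC subrK. Qed.
End Alg.

Section MVsec.
Variables (V : finType) (G : zmodType).

Lemma matchI (A : {set {set V}}) n (c : chain V G) :
  (forall k, n = k.+1 -> Inf A k (bd c)) -> (if n is k.+1 then Inf A k (bd c) else True).
Proof. by case: n => // k; apply. Qed.

Lemma matchE (A : {set {set V}}) n (c : chain V G) :
  (if n is k.+1 then Inf A k (bd c) else True) -> forall k, n = k.+1 -> Inf A k (bd c).
Proof. by case: n => // k h _ [<-]. Qed.

Lemma relB0 (X Y : {set {set V}}) n : relB X Y n (0 : chain V G).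
Proof. by exists 0, 0; split; [apply: Inf0 | split; [apply: Inf0 | rewrite bd0 addr0]]. Qed.

Lemma relB_relZ (X Y : {set {set V}}) n (c : chain V G) :
  Y \subset X -> relB X Y n c -> relZ X Y n c.
Proof.
move=> YX [y [a [hy [ha ->]]]]; split.
  by apply: InfD; [apply: Inf_bd | apply: Inf_mono ha].
apply: matchI => k ek; subst n; rewrite bdD bdbd add0r; exact: Inf_bd.
Qed.

Lemma relZD (X Y : {set {set V}}) n (x y : chain V G) :
  relZ X Y n x -> relZ X Y n y -> relZ X Y n (x + y).
Proof.
move=> [hx bx] [hy b]; split; first exact: InfD.
apply: matchI => k ek; rewrite bdD; apply: InfD; [exact: (matchE bx ek) | exact: (matchE b ek)].
Qed.

End MVsec.

Lemma MV_general (V : finType) (G : zmodType) (B1 A1 B2 A2 : {set {set V}}) :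
  A1 \subset B1 -> A2 \subset B2 -> Cond B1 B2 -> Cond A1 A2 -> MV_les G B1 A1 B2 A2.
Proof.
move=> sA1 sA2 cB cA.
have IuD n (x1 x2 : chain V G) : Inf B1 n x1 -> Inf B2 n x2 -> Inf (B1 :|: B2) n (x1 + x2).
  move=> h1 h2; apply: InfD; [apply: Inf_mono h1; exact: subsetUl | apply: Inf_mono h2; exact: subsetUr].
have JuD n (x1 x2 : chain V G) : Inf A1 n x1 -> Inf A2 n x2 -> Inf (A1 :|: A2) n (x1 + x2).
  move=> h1 h2; apply: InfD; [apply: Inf_mono h1; exact: subsetUl | apply: Inf_mono h2; exact: subsetUr].
have sAu : A1 :|: A2 \subset B1 :|: B2 by apply: setUSS.
pose P n (z x : chain V G) := exists z1 z2 a1 a2,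
  [/\ Inf B1 n.+1 z1, Inf B2 n.+1 z2, Inf A1 n a1, Inf A2 n a2 &
      [/\ z = z1 + z2, bd z = a1 + a2 & x = bd z1 - a1]].
have Pex n z : relZ (B1 :|: B2) (A1 :|: A2) n.+1 z -> exists x, P n z x.
  case=> hz hbz; case: (InfU cB hz) => z1 [z2 [h1 h2 ez]].
  case: (InfU cA hbz) => a1 [a2 [g1 g2 ea]].
  by exists (bd z1 - a1), z1, z2, a1, a2.
have [d dP] : exists d : nat -> chain V G -> chain V G,
    forall n z, relZ (B1 :|: B2) (A1 :|: A2) n.+1 z -> P n z (d n z).
  have h : forall n z, exists x, relZ (B1 :|: B2) (A1 :|: A2) n.+1 z -> P n z x.
    move=> n z; case: (classic (relZ (B1 :|: B2) (A1 :|: A2) n.+1 z)) => [hz|hz];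
      last by exists 0.
    by case: (Pex n z hz) => x hx; exists x.
  exists (fun n z => proj1_sig (constructive_indefinite_description _ (h n z))).
  by move=> n z; exact: (proj2_sig (constructive_indefinite_description _ (h n z))).
have P0 n : P n 0 0.
  exists 0, 0, 0, 0; split; try exact: Inf0.
  by split; rewrite ?bd0 ?addr0 ?subr0.
have PB n z x z' x' : P n z x -> P n z' x' -> P n (z - z') (x - x').
  move=> [z1 [z2 [a1 [a2 [h1 h2 g1 g2 [e1 e2 e3]]]]]].
  move=> [z1' [z2' [a1' [a2' [h1' h2' g1' g2' [e1' e2' e3']]]]]].
  exists (z1 - z1'), (z2 - z2'), (a1 - a1'), (a2 - a2'); split; try exact: InfB.
  split; first by rewrite e1 e1' subADD.
    by rewrite bdB e2 e2' subADD.
  by rewrite e3 e3' bdB subACA.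
have PN n z x : P n z x -> P n (- z) (- x).
  by move=> h; have := PB _ _ _ _ _ (P0 n) h; rewrite !sub0r.
have PD n z x z' x' : P n z x -> P n z' x' -> P n (z + z') (x + x').
  by move=> h h'; have := PB _ _ _ _ _ h (PN _ _ _ h'); rewrite !opprK.
have Pwd n z x y a : P n z x -> Inf (B1 :|: B2) n.+2 y -> Inf (A1 :|: A2) n.+1 a ->
    z = bd y + a -> relB (B1 :&: B2) (A1 :&: A2) n x.
  move=> [z1 [z2 [a1 [a2 [h1 h2 g1 g2 [e1 e2 e3]]]]]] hy ha ez.
  case: (InfU cB hy) => y1 [y2 [k1 k2 ey]]; case: (InfU cA ha) => b1 [b2 [l1 l2 ea]].
  have E : z1 + z2 = (bd y1 + b1) + (bd y2 + b2) by rewrite -e1 ez ey ea bdD addrACA.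
  have Ew := eq_swap E.
  have Eb : bd z1 + bd z2 = a1 + a2 by rewrite -bdD -e1.
  have Ex := eq_swap Eb.
  pose w := z1 - (bd y1 + b1).
  have w1 : Inf B1 n.+1 w.
    apply: InfB => //; apply: InfD; [exact: Inf_bd | exact: Inf_mono sA1 l1].
  have w2 : Inf B2 n.+1 w.
    rewrite /w Ew; apply: InfB => //; apply: InfD; [exact: Inf_bd | exact: Inf_mono sA2 l2].
  exists w, (x - bd w); split; first by apply/InfI.
  split; last by rewrite addrC subrK.
  apply/InfI; split.
    have -> : x - bd w = bd b1 - a1 by rewrite /w e3 bdB bdD bdbd add0r sub_sub1.
    by apply: InfB => //; exact: Inf_bd.
  have -> : x - bd w = a2 - bd b2 by rewrite e3 Ex /w Ew bdB bdD bdbd add0r sub_sub2.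
  by apply: InfB => //; exact: Inf_bd.
cbv zeta; exists d; split; last first.
  move=> z [hz _]; case: (InfU cB hz) => z1 [z2 [h1 h2 e]]; exists (z1, z2) => //.
  exists 0, 0; split; first exact: Inf0.
  by split; [exact: Inf0 | rewrite /mv_j /= -e subrr bd0 addr0].
move=> n; split; split.
- split.
  + move=> x [/InfI [hx1 hx2] hbx]; split; split => //=.
    * by apply: matchI => k ek; case/InfI: (matchE hbx ek).
    * exact: InfN.
    * by apply: matchI => k ek; case/InfI: (matchE hbx ek) => _ h; rewrite bdN; apply: InfN.
  + move=> x [y [a [/InfI [hy1 hy2] [/InfI [ha1 ha2] ->]]]]; split.
      by exists y, a.
    exists (- y), (- a); split; first exact: InfN.
    by split; [exact: InfN | rewrite /= bdN opprD].
  + move=> x y _ _; split; rewrite /=.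
      by rewrite addrAC addrK subrr; apply: relB0.
    by rewrite opprD !opprK addrAC subrK addNr; apply: relB0.
- split.
  + move=> [p q] [[hp bp] [hq bq]]; split; first exact: IuD.
    apply: matchI => k ek; rewrite /mv_j /= bdD; apply: JuD; [exact: (matchE bp ek) | exact: (matchE bq ek)].
  + move=> [p q] [[y1 [a1 [k1 [l1 e1]]]] [y2 [a2 [k2 [l2 e2]]]]].
    exists (y1 + y2), (a1 + a2); split; first exact: IuD.
    by split; [exact: JuD | move: e1 e2 => /= -> ->; rewrite /mv_j /= bdD addrACA].
  + move=> [p q] [p' q'] _ _; rewrite /mv_j /=.
    have -> : p + p' + (q + q') - (p + q) - (p' + q') = 0.
      by rewrite addrACA; move: (p + q) (p' + q') => u v; rewrite addrAC addrK subrr.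
    exact: relB0.
- split.
  + move=> z hz; case: (dP n z hz) => z1 [z2 [a1 [a2 [h1 h2 g1 g2 [e1 e2 e3]]]]].
    have Eb : bd z1 + bd z2 = a1 + a2 by rewrite -bdD -e1.
    have Ex := eq_swap Eb.
    split.
      apply/InfI; split; rewrite e3; first by apply: InfB; [exact: Inf_bd | exact: Inf_mono sA1 g1].
      by rewrite Ex; apply: InfB; [exact: Inf_mono sA2 g2 | exact: Inf_bd].
    apply: matchI => k ek; subst n; apply/InfI; split.
      by rewrite e3 bdB bdbd sub0r; apply: InfN; apply: Inf_bd.
    by rewrite e3 Ex bdB bdbd subr0; apply: Inf_bd.
  + move=> z hz; have hz' := relB_relZ sAu hz.
    case: hz => y [a [hy [ha ez]]]; exact: Pwd (dP n z hz') hy ha ez.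
  + move=> x y hx hy.
    have hxy := relZD hx hy.
    have := PB _ _ _ _ _ (dP _ _ hxy) (PD _ _ _ _ _ (dP _ _ hx) (dP _ _ hy)).
    rewrite subrr => /Pwd h; rewrite -addrA -opprD; apply: (h 0 0); try exact: Inf0.
    by rewrite bd0 addr0.
- move=> x hx; split.
    * case=> [[y1 [a1 [k1 [l1 e1]]]] [y2 [a2 [k2 [l2 e2]]]]]; move: e1 e2 => /= e1 e2.
      have eb : bd (y1 + y2) = - a1 + - a2.
        apply/eqP; rewrite -opprD -addr_eq0 bdD addrACA -e1 -e2 subrr //.
      have hw : relZ (B1 :|: B2) (A1 :|: A2) n.+1 (y1 + y2).
        split; first exact: IuD.
        by rewrite /= eb; apply: JuD; apply: InfN.
      have Pw : P n (y1 + y2) x.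
        exists y1, y2, (- a1), (- a2); split => //; try exact: InfN.
        by split => //; rewrite e1 opprK.
      exists (y1 + y2) => //.
      have := PB _ _ _ _ _ Pw (dP _ _ hw); rewrite subrr => /Pwd h.
      by apply: (h 0 0); try exact: Inf0; rewrite bd0 addr0.
    * case=> w hw [y [a [/InfI [y1 y2] [/InfI [ha1 ha2] hb]]]].
      case: (dP n w hw) => z1 [z2 [a1 [a2 [h1 h2 g1 g2 [e1 e2 e3]]]]].
      have Eb : bd z1 + bd z2 = a1 + a2 by rewrite -bdD -e1.
      have Ex := eq_swap Eb.
      rewrite /mv_i /=; split.
        exists (y + z1), (a - a1); split; first exact: InfD.
        split; first exact: InfB.
        by rewrite bdD addrACA -e3 -hb subrK.
      have ex2 : x = bd (y - z2) + (a + a2).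
        by rewrite bdB addrACA -hb [- bd z2 + a2]addrC -Ex -e3 subrK.
      exists (- (y - z2)), (- (a + a2)); split; first by apply: InfN; apply: InfB.
      by split; [apply: InfN; apply: InfD | rewrite ex2 bdN opprD].
- move=> [p q] [[hp bp] [hq bq]]; split.
    * case=> y [a [hy [ha e]]]; rewrite /mv_j /= in e.
      case: (InfU cB hy) => y1 [y2 [k1 k2 ey]]; case: (InfU cA ha) => a1 [a2 [l1 l2 ea]].
      have E : p + q = (bd y1 + a1) + (bd y2 + a2) by rewrite e ey ea bdD addrACA.
      have Ew := eq_swap E.
      exists (p - (bd y1 + a1)).
        split.
          apply/InfI; split.
            by apply: InfB => //; apply: InfD; [exact: Inf_bd | exact: Inf_mono sA1 l1].
          by rewrite Ew; apply: InfB => //; apply: InfD; [exact: Inf_bd | exact: Inf_mono sA2 l2].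
        apply: matchI => k ek; subst n; apply/InfI; split.
          rewrite bdB bdD bdbd add0r; apply: InfB; [exact: bp | exact: Inf_bd].
        rewrite Ew bdB bdD bdbd add0r; apply: InfB; [exact: Inf_bd | exact: bq].
      rewrite /mv_i /=; split.
        by exists y1, a1; split => //; split => //; rewrite /= subsubK.
      by exists y2, a2; split => //; split => //; rewrite /= opprK Ew addrC subrK.
    * case=> w hw; case=> [[y1 [a1 [k1 [l1 e1]]]] [y2 [a2 [k2 [l2 e2]]]]]; move: e1 e2 => /= e1 e2.
      exists (y1 + y2), (a1 + a2); split; first exact: IuD.
      split; first exact: JuD.
      rewrite /mv_j /=.
      have -> : p + q = (p - w) + (q - - w) by rewrite opprK addrACA addNr addr0.
      by rewrite e1 e2 bdD addrACA.
- move=> z hz; case: (dP n z hz) => z1 [z2 [a1 [a2 [h1 h2 g1 g2 [e1 e2 e3]]]]].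
    have Eb : bd z1 + bd z2 = a1 + a2 by rewrite -bdD -e1.
    have Ex := eq_swap Eb.
    split.
    * case=> y [a [/InfI [hy1 hy2] [/InfI [ha1 ha2] e]]].
      exists (z1 - y, z2 + y).
        split; split => /=.
        - exact: InfB.
        - have -> : bd (z1 - y) = a + a1.
            by rewrite bdB -[bd z1](subrK a1) -e3 e addrAC [bd y + a]addrC addrK.
          exact: InfD.
        - exact: InfD.
        - have -> : bd (z2 + y) = a2 - a by rewrite bdD; apply: eq_swap2; rewrite -Ex -e3 e.
          exact: InfB.
      rewrite /mv_j /= addrACA addNr addr0 -e1 subrr; exact: relB0.
    * case=> [[p q] [[hp bp] [hq bq]] [y [a [hy [ha e]]]]].
      have Pq : P n (p + q) 0.
        exists p, q, (bd p), (bd q); split => //; try exact: (matchE bp erefl); try exact: (matchE bq erefl).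
        by split; rewrite ?bdD ?subrr.
      have := PB _ _ _ _ _ (dP _ _ hz) Pq; rewrite subr0 => /Pwd h; exact: (h y a hy ha e).
Qed.

Unset Implicit Arguments.
Close Scope ring_scope.

Theorem mainTheorem8 (V : finType) (G : zmodType) (H H' : {set {set V}}) :
  hypergraph H -> hypergraph H' ->
  (forall s s', s \in H -> s' \in H' ->
     s :&: s' = set0 \/ s :&: s' \in H :&: H') ->
  MV_les G H (delta H) H' (delta H') /\
  MV_les G (Delta H) H (Delta H') H'.
Proof.
move=> hH hH' hyp; split.
- apply: MV_general; [exact: delta_sub | exact: delta_sub | exact: Cond_hyp |
    apply: Cond_down; exact: down_delta].
- apply: MV_general; [exact: Delta_sup | exact: Delta_sup |
    apply: Cond_down; exact: down_Delta | exact: Cond_hyp].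
Qed.
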